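(* Let $A, B, C, D \in \mathrm{SL}(2,\mathbb{R})$ and for integers $k, \ell$ let $M_{k,\ell} = D^\ell C B^k A$. Suppose $\mathrm{Tr}(B) = \mathrm{Tr}(D)$. Then for all integers $k \ge 3$, $$\mathrm{Tr}(M_{k,k}) = (\mathrm{Tr}(B)^2 - 1)\big(\mathrm{Tr}(M_{k-1,k-1}) - \mathrm{Tr}(M_{k-2,k-2})\big) + \mathrm{Tr}(M_{k-3,k-3}).$$ *)

(* Defs.v *)
From mathcomp Require Import all_boot all_order all_algebra.
From mathcomp Require Import reals.
Set Implicit Arguments. Unset Strict Implicit. Unset Printing Implicit Defensive.
Import GRing.Theory Num.Theory.
Local Open Scope ring_scope.

Definition SL2 (R : realType) (M : 'M[R]_2) : Prop := \det M = 1.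

Definition Mkl (R : realType) (A B C D : 'M[R]_2) (k l : nat) : 'M[R]_2 :=
  D ^+ l *m C *m B ^+ k *m A.

(* Main.v *)
Require Import Defs.
From mathcomp Require Import all_boot all_order all_algebra.
From mathcomp Require Import reals ring.
Import GRing.Theory Num.Theory.
Local Open Scope ring_scope.
Lemma I2 (i : 'I_2) : i = ord0 \/ i = lift ord0 ord0.
Proof. by case: i => [[|[|i]] Hi]; [left|right|]; try apply/val_inj. Qed.
Lemma ch2 (R : realType) (B : 'M[R]_2) : \det B = 1 ->
  B ^+ 2 = \tr B *: B - 1%:M.
Proof.
move=> hB; rewrite expr2; apply/matrixP=> i j.
move: hB.
rewrite (expand_det_row _ ord0).
rewrite !big_ord_recl big_ord0 /cofactor.
rewrite !det_mx11 /row' /col' ?mxE => hB.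
have E1 : lift ord0 (0:'I_1) = lift ord0 ord0 :> 'I_2 by apply/val_inj.
have E2 : lift (lift ord0 ord0) (0:'I_1) = ord0 :> 'I_2 by apply/val_inj.
rewrite E1 E2 in hB.
have F1 : ((@ord0 1) + (@ord0 1) = 0)%N by [].
have F2 : ((@ord0 1) + lift ord0 (@ord0 1) = 1)%N by [].
rewrite F1 F2 expr0 expr1 in hB.
rewrite ?mxE /mxtrace !big_ord_recl !big_ord0.
have G1 : ((ord0 == lift ord0 ord0 :> 'I_2)%:R : R) = 0 by [].
have G2 : ((lift ord0 ord0 == ord0 :> 'I_2)%:R : R) = 0 by [].
have G3 : ((ord0 == ord0 :> 'I_2)%:R : R) = 1 by rewrite eqxx.
have G4 : ((lift ord0 ord0 == lift ord0 ord0 :> 'I_2)%:R : R) = 1 by rewrite eqxx.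
rewrite mul1r mulN1r in hB.
case: (I2 i) => ->; case: (I2 j) => ->; rewrite ?mxE ?G1 ?G2 ?G3 ?G4;
move: hB; move: (B ord0 ord0) (B ord0 (lift ord0 ord0)) (B (lift ord0 ord0) ord0)
  (B (lift ord0 ord0) (lift ord0 ord0)) => a b c d hB; rewrite ?subr0.
- rewrite -[X in _ = _ - X]hB; ring.
- ring.
- ring.
- rewrite -[X in _ = _ - X]hB; ring.
Qed.

Lemma ch3 (R : realType) (t : R) (D : 'M[R]_2) :
  D ^+ 2 = t *: D - 1%:M -> D ^+ 3 = (t ^+ 2 - 1) *: D - t *: 1%:M.
Proof.
move=> hD; rewrite exprS hD mulrBr mulr1 -scalerAr -expr2 hD.
apply/matrixP=> i j; rewrite !mxE.
move: (D i j) (1%:M i j : R) => a b; ring.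
Qed.

Lemma opid (R : realType) (t : R) (B D X : 'M[R]_2) :
  B ^+ 2 = t *: B - 1%:M -> D ^+ 2 = t *: D - 1%:M ->
  D ^+ 3 *m X *m B ^+ 3 = (t ^+ 2 - 1) *: (D ^+ 2 *m X *m B ^+ 2 - D *m X *m B) + X.
Proof.
move=> hB hD.
rewrite (@ch3 _ _ _ hB) (@ch3 _ _ _ hD) hB hD.
apply/matrixP=> i j.
rewrite !(mxE, big_ord_recl, big_ord0).
have G1 : ((ord0 == lift ord0 ord0 :> 'I_2)%:R : R) = 0 by [].
have G2 : ((lift ord0 ord0 == ord0 :> 'I_2)%:R : R) = 0 by [].
have G3 : ((ord0 == ord0 :> 'I_2)%:R : R) = 1 by rewrite eqxx.
have G4 : ((lift ord0 ord0 == lift ord0 ord0 :> 'I_2)%:R : R) = 1 by rewrite eqxx.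
set o := lift ord0 ord0.
case: (I2 i) => ->; case: (I2 j) => ->; rewrite ?G1 ?G2 ?G3 ?G4;
move: (B ord0 ord0) (B ord0 o) (B o ord0) (B o o)
      (D ord0 ord0) (D ord0 o) (D o ord0) (D o o)
      (X ord0 ord0) (X ord0 o) (X o ord0) (X o o) => *; ring.
Qed.
Lemma shift (R : realType) (C B D : 'M[R]_2) (m j : nat) :
  D ^+ (j + m) *m C *m B ^+ (m + j) = D ^+ j *m (D ^+ m *m C *m B ^+ m) *m B ^+ j.
Proof. by rewrite !exprD !mulmxE !mulrA. Qed.

Theorem lemma2p3 (R : realType) (A B C D : 'M[R]_2)
  (hA : SL2 A) (hB : SL2 B) (hC : SL2 C) (hD : SL2 D)
  (hBD : \tr B = \tr D) (k : nat) (hk : (3 <= k)%N) :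
  \tr (Mkl A B C D k k) =
    (\tr B ^+ 2 - 1) * (\tr (Mkl A B C D k.-1 k.-1) - \tr (Mkl A B C D k.-2 k.-2))
    + \tr (Mkl A B C D (k - 3) (k - 3)).
Proof.
case: k hk => [|[|[|n]]] // _.
have -> : (n.+3 - 3)%N = n by rewrite -addn3 addnK.
rewrite /Mkl /=.
have hB2 := @ch2 _ _ hB.
have hD2 := @ch2 _ _ hD. rewrite -hBD in hD2.
set X := D ^+ n *m C *m B ^+ n.
have e3 : D ^+ n.+3 *m C *m B ^+ n.+3 = D ^+ 3 *m X *m B ^+ 3.
  by rewrite /X -(@shift _ C B D n 3) (addnC n 3).
have e2 : D ^+ n.+2 *m C *m B ^+ n.+2 = D ^+ 2 *m X *m B ^+ 2.
  by rewrite /X -(@shift _ C B D n 2) (addnC n 2).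
have e1 : D ^+ n.+1 *m C *m B ^+ n.+1 = D ^+ 1 *m X *m B ^+ 1.
  by rewrite /X -(@shift _ C B D n 1) (addnC n 1).
rewrite e3 e2 e1 (@opid _ _ _ _ X hB2 hD2) !expr1.
by rewrite mulmxDl -scalemxAl mulmxBl mxtraceD mxtraceZ linearB.
Qed.
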